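(* Let $X$ be a Baire space and let $Y$ be a topological space which has a dense set of $W$-points and such that the strong Choquet game $Ch(Y)$ is $\beta$-unfavorable. Then $X\times Y$ is a Baire space.
   Context: A topological space is a Baire space if every countable intersection of dense open subsets is dense. The strong Choquet game $Ch(Y)$: players $\beta$ and $\alpha$ alternate, $\beta$ first; at round $n$, $\beta$ chooses a point $x_n$ and an open set $V_n\ni x_n$ (with $V_n\subseteq U_{n-1}$ if $n\ge1$), then $\alpha$ chooses an open $U_n$ with $x_n\in U_n\subseteq V_n$; $\alpha$ wins if $\bigcap_n U_n\neq\emptyset$, otherwise $\beta$ wins. $Ch(Y)$ is $\beta$-unfavorable if $\beta$ has no winning strategy (a strategy being a function from finite sequences of opponent moves to legal moves, winning if every compatible play is won). The Gruenhage game $G(Y)$ at a point $y\in Y$: at round $n$, Player I chooses an open neighborhood $U_n$ of $y$ and Player II chooses a point $y_n\in U_n$; Player I wins if $(y_n)_n$ converges to $y$. A point $y$ is a $W$-point if Player I has a winning strategy in $G(Y)$ at $y$. *)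

(* Defs.v *)
From Stdlib Require Import List Arith.
Import ListNotations.

(** Topological spaces: a carrier with a family of open sets (Prop-valued
    subsets) containing the whole space, closed under binary intersections
    and arbitrary unions (the empty union gives the empty set). *)
Record topology := Topology {
  carrier :> Type;
  is_open : (carrier -> Prop) -> Prop;
  open_full : is_open (fun _ => True);
  open_inter : forall A B, is_open A -> is_open B -> is_open (fun x => A x /\ B x);
  open_union : forall (I : Type) (F : I -> carrier -> Prop),
      (forall i, is_open (F i)) -> is_open (fun x => exists i, F i x)
}.

Arguments is_open {t} _.

Definition prod_open (X Y : topology) (W : X * Y -> Prop) : Prop :=
  forall p, W p -> exists (A : X -> Prop) (B : Y -> Prop),
    is_open A /\ is_open B /\ A (fst p) /\ B (snd p) /\
    (forall a b, A a -> B b -> W (a, b)).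

Lemma prod_open_full (X Y : topology) : prod_open X Y (fun _ => True).
Proof.
  intros p _. exists (fun _ => True), (fun _ => True).
  repeat split; auto using open_full.
Qed.

Lemma prod_open_inter (X Y : topology) (A B : X * Y -> Prop) :
  prod_open X Y A -> prod_open X Y B -> prod_open X Y (fun x => A x /\ B x).
Proof.
  intros HA HB p [Ap Bp].
  destruct (HA p Ap) as (A1 & B1 & oA1 & oB1 & a1 & b1 & s1).
  destruct (HB p Bp) as (A2 & B2 & oA2 & oB2 & a2 & b2 & s2).
  exists (fun x => A1 x /\ A2 x), (fun y => B1 y /\ B2 y).
  repeat split; try apply open_inter; auto; firstorder.
Qed.

Lemma prod_open_union (X Y : topology) (I : Type) (F : I -> X * Y -> Prop) :
  (forall i, prod_open X Y (F i)) -> prod_open X Y (fun x => exists i, F i x).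
Proof.
  intros HF p [i Hi].
  destruct (HF i p Hi) as (A & B & oA & oB & a & b & s).
  exists A, B. repeat split; auto. intros x y Hx Hy. exists i. auto.
Qed.

Definition prod_topology (X Y : topology) : topology :=
  @Topology (X * Y)%type (prod_open X Y) (prod_open_full X Y)
    (prod_open_inter X Y) (prod_open_union X Y).

Definition dense {T : topology} (D : T -> Prop) : Prop :=
  forall U : T -> Prop, is_open U -> (exists x, U x) -> exists x, U x /\ D x.

Definition baire_space (T : topology) : Prop :=
  forall G : nat -> T -> Prop,
    (forall n, is_open (G n)) -> (forall n, dense (G n)) ->
    dense (fun x => forall n, G n x).

Definition prefix {A : Type} (u : nat -> A) (n : nat) : list A :=
  map u (seq 0 n).

(** A strategy for beta maps the finite sequence
    (U_0, ..., U_{n-1}) of alpha's previous moves to beta's move (x_n, V_n).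
    Given alpha's moves U : nat -> set, beta's n-th move is sigma (prefix U n). *)
Definition choquet_beta_strategy (Y : topology) : Type :=
  list (Y -> Prop) -> Y * (Y -> Prop).

Definition choquet_beta_legal {Y : topology} (sigma : choquet_beta_strategy Y)
    (U : nat -> Y -> Prop) (n : nat) : Prop :=
  let (x, V) := sigma (prefix U n) in
  is_open V /\ V x /\ (forall m, n = S m -> forall y, V y -> U m y).

Definition choquet_alpha_legal {Y : topology} (sigma : choquet_beta_strategy Y)
    (U : nat -> Y -> Prop) (n : nat) : Prop :=
  let (x, V) := sigma (prefix U n) in
  is_open (U n) /\ U n x /\ (forall y, U n y -> V y).

Definition choquet_beta_winning {Y : topology} (sigma : choquet_beta_strategy Y) : Prop :=
  forall U : nat -> Y -> Prop,
    (forall n, (forall k, k < n -> choquet_alpha_legal sigma U k) ->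
               choquet_beta_legal sigma U n) /\
    ((forall n, choquet_alpha_legal sigma U n) -> ~ exists y, forall n, U n y).

Definition choquet_beta_unfavorable (Y : topology) : Prop :=
  forall sigma : choquet_beta_strategy Y, ~ choquet_beta_winning sigma.

Definition converges {T : topology} (u : nat -> T) (y : T) : Prop :=
  forall O : T -> Prop, is_open O -> O y -> exists N, forall n, N <= n -> O (u n).

(** A strategy for Player I maps the list
    (y_0, ..., y_{n-1}) of Player II's previous points to an open
    neighbourhood U_n of y. *)
Definition gruenhage_I_winning {Y : topology} (y : Y) (tau : list Y -> Y -> Prop) : Prop :=
  (forall s, is_open (tau s) /\ tau s y) /\
  (forall ys : nat -> Y, (forall n, tau (prefix ys n) (ys n)) -> converges ys y).

Definition W_point {Y : topology} (y : Y) : Prop :=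
  exists tau : list Y -> Y -> Prop, gruenhage_I_winning y tau.

(* Main.v *)
Require Import Defs.
From Stdlib Require Import List Arith Lia Classical ClassicalEpsilon FunctionalExtensionality PropExtensionality.
From Stdlib Require Cantor.
From mathcomp Require classical_sets.
Import ListNotations.

Lemma zorn_plain (T:Type) (P : (T->Prop) -> Prop) :
  (forall F : (T->Prop)->Prop, (forall X, F X -> P X) ->
     (forall X Y, F X -> F Y -> (forall t, X t -> Y t) \/ (forall t, Y t -> X t)) ->
     P (fun t => exists2 X, F X & X t)) ->
  exists A, P A /\ forall B, (forall t, A t -> B t) -> P B -> forall t, B t -> A t.
Proof.
  intros H.
  destruct (@classical_sets.Zorn_bigcup T P) as [A [PA HA]].
  - intros F FP Ftot. apply H; auto.
  - exists A; split; auto. intros B AB PB t Bt.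
    apply NNPP; intro nA. apply (HA B); auto. split.
    + exact AB.
    + intro BA. apply nA. apply BA. exact Bt.
Qed.

Lemma pred_ext {T : Type} (A B : T -> Prop) : (forall x, A x <-> B x) -> A = B.
Proof. intro H. apply functional_extensionality. intro x. apply propositional_extensionality. auto. Qed.

Lemma open_ext {T : topology} (A B : T -> Prop) : (forall x, A x <-> B x) -> is_open A -> is_open B.
Proof. intros H HA. rewrite <- (pred_ext A B H). exact HA. Qed.

Lemma open_and {T : topology} (A B : T -> Prop) : is_open A -> is_open B -> is_open (fun x => A x /\ B x).
Proof. apply open_inter. Qed.

Lemma open_or {T : topology} (A B : T -> Prop) : is_open A -> is_open B -> is_open (fun x => A x \/ B x).
Proof.
  intros HA HB.
  apply (open_ext (fun x => exists b : bool, (if b then A else B) x)).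
  - intro x; split.
    + intros [[|] H]; auto.
    + intros [H|H]; [exists true|exists false]; auto.
  - apply open_union. intros [|]; auto.
Qed.

Lemma open_list_all {T : topology} (l : list (T -> Prop)) :
  (forall U, In U l -> is_open U) -> is_open (fun z => forall U, In U l -> U z).
Proof.
  induction l as [|U l IH]; intros H.
  - apply (open_ext (fun _ => True)). { intro x; split; [intros _ U HU; destruct HU | auto]. }
    apply open_full.
  - apply (open_ext (fun z => U z /\ (forall U', In U' l -> U' z))).
    { intro z; split.
      - intros [h1 h2] U' HU. destruct HU as [<-|HU]. exact h1. apply h2; exact HU.
      - intro h; split. apply h; left; reflexivity. intros U' HU; apply h; right; exact HU. }
    apply open_inter. apply H; left; auto. apply IH. intros; apply H; right; auto.
Qed.

Lemma prefix_ext {A : Type} (f g : nat -> A) n : (forall i, i < n -> f i = g i) -> prefix f n = prefix g n.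
Proof.
  intro H. unfold prefix. apply map_ext_in. intros i Hi. apply in_seq in Hi. apply H. lia.
Qed.

Lemma prefix_S {A : Type} (f : nat -> A) n : prefix f (S n) = prefix f n ++ [f n].
Proof. unfold prefix. rewrite seq_S, map_app. reflexivity. Qed.

Lemma in_prefix {A : Type} (f : nat -> A) n a : In a (prefix f n) <-> exists i, i < n /\ a = f i.
Proof.
  unfold prefix. rewrite in_map_iff. split.
  - intros [i [<- Hi]]. apply in_seq in Hi. exists i; split; auto; lia.
  - intros [i [Hi ->]]. exists i; split; auto. apply in_seq; lia.
Qed.

Definition idx (m j : nat) : nat := S (Cantor.to_nat (j, m)).

Lemma idx_gt m j : m < idx m j.
Proof. unfold idx. pose proof (Cantor.to_nat_non_decreasing j m). lia. Qed.

Lemma idx_mono m j j' : j' < j -> idx m j' < idx m j.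
Proof.
  intro H. unfold idx. pose proof (Cantor.to_nat_spec j m). pose proof (Cantor.to_nat_spec j' m). nia.
Qed.

Lemma idx_inj m j m' j' : idx m j = idx m' j' -> m = m' /\ j = j'.
Proof.
  unfold idx. intro H. assert (H2 : Cantor.to_nat (j, m) = Cantor.to_nat (j', m')) by congruence.
  apply Cantor.to_nat_inj in H2. injection H2; auto.
Qed.

Lemma idx_surj K : exists m j, idx m j = S K.
Proof.
  destruct (Cantor.of_nat K) as [j m] eqn:E. exists m, j. unfold idx.
  rewrite <- E, Cantor.cancel_to_of. reflexivity.
Qed.

Definition tau_of {Y : topology} (y : Y) : list Y -> Y -> Prop :=
  epsilon (inhabits (fun _ _ => True)) (fun t => gruenhage_I_winning y t).

Lemma tau_of_spec {Y : topology} (y : Y) : W_point y -> gruenhage_I_winning y (tau_of y).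
Proof. intros [t Ht]. unfold tau_of. apply epsilon_spec. exists t; exact Ht. Qed.

Record node (X Y : topology) := mkNode { nA : X -> Prop; nw : nat -> Y; nN : nat -> Y -> Prop }.
Arguments mkNode {X Y}. Arguments nA {X Y}. Arguments nw {X Y}. Arguments nN {X Y}.

Definition rect_prop (X Y : topology) (H : nat -> X * Y -> Prop) : Prop :=
  forall k (A : X -> Prop) (B : Y -> Prop), is_open A -> is_open B -> (exists a, A a) -> (exists b, B b) ->
  exists A' N, is_open A' /\ is_open N /\ (exists a, A' a) /\ (exists b, N b) /\
    (forall a, A' a -> A a) /\ (forall b, N b -> B b) /\ (forall a b, A' a -> N b -> H k (a,b)).

Definition valid (X Y : topology) (A0 : X -> Prop) (B0 : Y -> Prop) (H : nat -> X * Y -> Prop)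
  (k : nat) (v : node X Y) : Prop :=
  is_open (nA v) /\ (exists a, nA v a) /\ (forall a, nA v a -> A0 a) /\
  (forall i, i <= k -> is_open (nN v i) /\ nN v i (nw v i) /\ (forall b, nN v i b -> B0 b) /\
      W_point (nw v i) /\ (forall a b, nA v a -> nN v i b -> H i (a,b))) /\
  (forall m j, idx m j <= k ->
      tau_of (nw v m) (prefix (fun j' => nw v (idx m j')) j) (nw v (idx m j))).

Definition extends {X Y : topology} (k : nat) (v' v : node X Y) : Prop :=
  (forall a, nA v' a -> nA v a) /\ (forall i, i <= k -> nw v' i = nw v i /\ nN v' i = nN v i).

Lemma base_node (X Y : topology) (A0 : X -> Prop) (B0 : Y -> Prop) (H : nat -> X * Y -> Prop) :
  rect_prop X Y H -> dense (fun y : Y => W_point y) -> is_open B0 -> (exists b, B0 b) ->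
  forall A'', is_open A'' -> (exists a, A'' a) -> (forall a, A'' a -> A0 a) ->
  exists v, valid X Y A0 B0 H 0 v /\ (forall a, nA v a -> A'' a).
Proof.
  intros HR HWd oB0 neB0 A'' oA'' neA'' sA''.
  destruct (HR 0 A'' B0 oA'' oB0 neA'' neB0) as (A' & N & oA' & oN & neA' & neN & sA' & sN & HAN).
  destruct (HWd N oN neN) as [w [Nw Ww]].
  exists (mkNode A' (fun _ => w) (fun _ => N)). split; [|simpl; auto].
  unfold valid; simpl. split; [exact oA'|]. split; [exact neA'|]. split.
  { intros a Ha. apply sA''. apply sA'. exact Ha. }
  split.
  - intros i0 Hi0. split; [exact oN|]. split; [exact Nw|]. split; [exact sN|]. split; [exact Ww|].
    assert (i0 = 0) by lia. subst. exact HAN.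
  - intros m j Hj. pose proof (idx_gt m j). lia.
Qed.

Lemma extend_node (X Y : topology) (A0 : X -> Prop) (B0 : Y -> Prop) (H : nat -> X * Y -> Prop) :
  rect_prop X Y H -> dense (fun y : Y => W_point y) -> is_open B0 ->
  forall k v, valid X Y A0 B0 H k v ->
  forall A'', is_open A'' -> (exists a, A'' a) -> (forall a, A'' a -> nA v a) ->
  exists v', valid X Y A0 B0 H (S k) v' /\ extends k v' v /\ (forall a, nA v' a -> A'' a).
Proof.
  intros HR HWd oB0 k v Hv A'' oA'' neA'' sA''.
  destruct Hv as (oA & neA & sA & Hi & Ht).
  destruct (idx_surj k) as (m & j & Hmj).
  assert (Hm : m <= k) by (pose proof (idx_gt m j); lia).
  destruct (Hi m Hm) as (oNm & Nmw & sNm & Wm & _).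
  destruct (tau_of_spec _ Wm) as [Htau _].
  set (T := fun b => tau_of (nw v m) (prefix (fun j' => nw v (idx m j')) j) b /\ B0 b).
  assert (oT : is_open T).
  { apply open_inter; auto. apply (proj1 (Htau _)). }
  assert (neT : exists b, T b).
  { exists (nw v m). split. apply (proj2 (Htau _)). apply sNm; auto. }
  destruct (HR (S k) A'' T oA'' oT neA'' neT) as (A' & N & oA' & oN & neA' & neN & sA' & sN & HAN).
  destruct (HWd N oN neN) as [w [Nw Ww]].
  set (v' := mkNode A' (fun i => if Nat.eqb i (S k) then w else nw v i)
                       (fun i => if Nat.eqb i (S k) then N else nN v i)).
  exists v'.
  assert (Ew : forall i, i <= k -> nw v' i = nw v i).
  { intros i Hik. simpl. destruct (Nat.eqb_spec i (S k)); [lia|reflexivity]. }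
  assert (EN : forall i, i <= k -> nN v' i = nN v i).
  { intros i Hik. simpl. destruct (Nat.eqb_spec i (S k)); [lia|reflexivity]. }
  split; [|split].
  - unfold valid. split; [exact oA'|]. split; [exact neA'|]. split.
    { intros a Ha. apply sA. apply sA''. apply sA'. exact Ha. }
    split.
    + intros i Hik. destruct (Nat.eq_dec i (S k)) as [->|ne].
      * simpl. rewrite Nat.eqb_refl. split; [exact oN|]. split; [exact Nw|].
        split; [intros b Nb; apply (proj2 (sN b Nb))|]. split; [exact Ww|]. exact HAN.
      * assert (i <= k) by lia. rewrite (Ew i H0), (EN i H0).
        destruct (Hi i H0) as (h1 & h2 & h3 & h4 & h5).
        split; [exact h1|]. split; [exact h2|]. split; [exact h3|]. split; [exact h4|].
        intros a b Ha Hb. apply h5; [exact (sA'' a (sA' a Ha))|exact Hb].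
    + intros m' j' Hle. destruct (Nat.eq_dec (idx m' j') (S k)) as [E|ne].
      * rewrite <- Hmj in E. apply idx_inj in E. destruct E as [-> ->].
        rewrite Hmj. rewrite (Ew m Hm).
        rewrite (prefix_ext (fun j' => nw v' (idx m j')) (fun j' => nw v (idx m j'))).
        -- simpl. rewrite Nat.eqb_refl. apply (proj1 (sN w Nw)).
        -- intros i Hij. apply Ew. pose proof (idx_mono m j i Hij). lia.
      * assert (Hle' : idx m' j' <= k) by lia.
        assert (Hm' : m' <= k) by (pose proof (idx_gt m' j'); lia).
        rewrite (Ew _ Hle'), (Ew _ Hm').
        rewrite (prefix_ext (fun j'' => nw v' (idx m' j'')) (fun j'' => nw v (idx m' j''))).
        -- apply Ht; auto.
        -- intros i Hij. apply Ew. pose proof (idx_mono m' j' i Hij). lia.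
  - split.
    + intros a Ha. apply sA''. apply sA'. exact Ha.
    + intros i Hik. split; auto.
  - intros a Ha. apply sA'. exact Ha.
Qed.

Definition disj {X Y : topology} (F : node X Y -> Prop) : Prop :=
  forall v u, F v -> F u -> (exists a, nA v a /\ nA u a) -> v = u.

Definition dens {X Y : topology} (A0 : X -> Prop) (F : node X Y -> Prop) : Prop :=
  forall U : X -> Prop, is_open U -> (exists a, U a /\ A0 a) -> exists v a, F v /\ U a /\ nA v a.

Lemma max_disj (X Y : topology) (A0 : X -> Prop) (C : node X Y -> Prop) :
  (forall v, C v -> exists a, nA v a) ->
  (forall U, is_open U -> (exists a, U a /\ A0 a) -> exists v, C v /\ forall a, nA v a -> U a) ->
  exists F, (forall v, F v -> C v) /\ disj F /\ dens A0 F.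
Proof.
  intros neC cofC.
  destruct (zorn_plain (node X Y) (fun F => (forall v, F v -> C v) /\ disj F)) as [M [[MC Md] Mmax]].
  - intros Fam FP Ftot. split.
    + intros v [Z FZ Zv]. apply (proj1 (FP Z FZ)). exact Zv.
    + intros v u [Z FZ Zv] [Z' FZ' Zu] Hm.
      destruct (Ftot Z Z' FZ FZ') as [s|s].
      * apply (proj2 (FP Z' FZ')); auto.
      * apply (proj2 (FP Z FZ)); auto.
  - exists M. split; [exact MC|]. split; [exact Md|].
    intros U oU neU. apply NNPP. intro Hno.
    destruct (cofC U oU neU) as [v0 [Cv0 sv0]].
    assert (Hm : M v0).
    { apply (Mmax (fun v => M v \/ v = v0)); [| |right; reflexivity].
      - intros t Mt; left; exact Mt.
      - split.
        + intros v [Mv| ->]; auto.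
        + intros v u [Mv| ->] [Mu| ->] [a [ha1 ha2]].
          * apply Md; auto. exists a; auto.
          * exfalso. apply Hno. exists v, a. split; auto.
          * exfalso. apply Hno. exists u, a. split; auto.
          * reflexivity. }
    destruct (neC v0 Cv0) as [a Ha]. apply Hno. exists v0, a. auto.
Qed.

Definition good (X Y : topology) (A0 : X -> Prop) (B0 : Y -> Prop) (H : nat -> X * Y -> Prop)
  (k : nat) (F : node X Y -> Prop) : Prop :=
  (forall v, F v -> valid X Y A0 B0 H k v) /\ disj F /\ dens A0 F.

Lemma good_base (X Y : topology) (A0 : X -> Prop) (B0 : Y -> Prop) (H : nat -> X * Y -> Prop) :
  rect_prop X Y H -> dense (fun y : Y => W_point y) -> is_open A0 -> is_open B0 -> (exists b, B0 b) ->
  exists F, good X Y A0 B0 H 0 F.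
Proof.
  intros HR HWd oA0 oB0 neB0.
  destruct (max_disj X Y A0 (valid X Y A0 B0 H 0)) as [F [FC [Fd Fde]]].
  - intros v Hv. apply (proj1 (proj2 Hv)).
  - intros U oU [a [Ua A0a]].
    destruct (base_node X Y A0 B0 H HR HWd oB0 neB0 (fun a => U a /\ A0 a)) as [v [Hv sv]].
    + apply open_inter; auto.
    + exists a; auto.
    + intros a' [_ h]; exact h.
    + exists v; split; auto. intros a' h; apply (proj1 (sv a' h)).
  - exists F. split; [|split]; auto.
Qed.

Lemma good_step (X Y : topology) (A0 : X -> Prop) (B0 : Y -> Prop) (H : nat -> X * Y -> Prop) :
  rect_prop X Y H -> dense (fun y : Y => W_point y) -> is_open B0 ->
  forall k F, good X Y A0 B0 H k F ->
  exists F', good X Y A0 B0 H (S k) F' /\ (forall v', F' v' -> exists v, F v /\ extends k v' v).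
Proof.
  intros HR HWd oB0 k F [FV [Fd Fde]].
  destruct (max_disj X Y A0 (fun v' => valid X Y A0 B0 H (S k) v' /\ exists v, F v /\ extends k v' v))
    as [F' [FC [Fd' Fde']]].
  - intros v [Hv _]. apply (proj1 (proj2 Hv)).
  - intros U oU neU.
    destruct (Fde U oU neU) as [v [a [Fv [Ua va]]]].
    destruct (extend_node X Y A0 B0 H HR HWd oB0 k v (FV v Fv) (fun a => U a /\ nA v a))
      as [v' [Hv' [ext sv']]].
    + apply open_inter; auto. apply (proj1 (FV v Fv)).
    + exists a; auto.
    + intros a' [_ h]; exact h.
    + exists v'. split.
      * split; auto. exists v; auto.
      * intros a' h; apply (proj1 (sv' a' h)).
  - exists F'. split.
    + split; [|split]; auto. intros v Hv. apply (proj1 (FC v Hv)).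
    + intros v' Hv'. apply (proj2 (FC v' Hv')).
Qed.

Lemma dep_seq (T : Type) (P : nat -> T -> Prop) (R : nat -> T -> T -> Prop) :
  (exists t, P 0 t) -> (forall k t, P k t -> exists t', P (S k) t' /\ R k t t') ->
  exists f : nat -> T, forall k, P k (f k) /\ R k (f k) (f (S k)).
Proof.
  intros [t0 H0] Hs.
  set (st := fun k (s : {t | P k t}) =>
         constructive_indefinite_description _ (Hs k (proj1_sig s) (proj2_sig s))).
  set (g := nat_rect (fun k => {t | P k t}) (exist _ t0 H0)
              (fun k s => exist _ (proj1_sig (st k s)) (proj1 (proj2_sig (st k s))))).
  exists (fun k => proj1_sig (g k)). intro k. split.
  - exact (proj2_sig (g k)).
  - change (g (S k)) with (exist (fun t => P (S k) t) (proj1_sig (st k (g k))) (proj1 (proj2_sig (st k (g k))))).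
    simpl. exact (proj2 (proj2_sig (st k (g k)))).
Qed.

Lemma xside (X Y : topology) (A0 : X -> Prop) (B0 : Y -> Prop) (H : nat -> X * Y -> Prop) :
  baire_space X -> rect_prop X Y H -> dense (fun y : Y => W_point y) ->
  is_open A0 -> is_open B0 -> (exists a, A0 a) -> (exists b, B0 b) ->
  exists (x : X) (w : nat -> Y) (N : nat -> Y -> Prop), A0 x /\
    (forall i, is_open (N i) /\ N i (w i) /\ (forall b, N i b -> B0 b) /\ W_point (w i)) /\
    (forall k b, N k b -> H k (x,b)) /\
    (forall m j, tau_of (w m) (prefix (fun j' => w (idx m j')) j) (w (idx m j))).
Proof.
  intros HX HR HWd oA0 oB0 neA0 neB0.
  destruct (dep_seq (node X Y -> Prop) (good X Y A0 B0 H)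
              (fun k F F' => forall v', F' v' -> exists v, F v /\ extends k v' v)) as [Fs HFs].
  - apply good_base; auto.
  - intros k F HF. apply good_step; auto.
  - unfold good, disj, dens in HFs.
    set (D := fun k a => (exists v, Fs k v /\ nA v a) \/
                         (exists U : {U : X -> Prop | is_open U /\ forall z, U z -> ~ A0 z}, proj1_sig U a)).
    assert (oD : forall k, is_open (D k)).
    { intro k. apply open_or.
      - apply (open_ext (fun a => exists i : {v | Fs k v}, nA (proj1_sig i) a)).
        + intro a; split.
          * intros [[v Hv] h]. exists v; auto.
          * intros [v [Hv h]]. exists (exist _ v Hv). exact h.
        + apply open_union. intros [v Hv]. simpl. apply (proj1 (proj1 (proj1 (HFs k)) v Hv)).
      - apply open_union. intros [U HU]. simpl. exact (proj1 HU). }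
    assert (dD : forall k, dense (D k)).
    { intros k U oU [a Ua].
      destruct (classic (exists a, U a /\ A0 a)) as [Hm|Hn].
      - destruct (proj2 (proj2 (proj1 (HFs k))) U oU Hm) as [v [a' [Fv [Ua' va']]]].
        exists a'. split; auto. left. exists v; auto.
      - exists a. split; auto. right.
        exists (exist _ U (conj oU (fun z Uz A0z => Hn (ex_intro _ z (conj Uz A0z))))). exact Ua. }
    destruct (HX D oD dD A0 oA0 neA0) as [x [A0x Dx]].
    assert (Hx : forall k, exists v, Fs k v /\ nA v x).
    { intro k. destruct (Dx k) as [h|[[U [oU nU]] h]]; auto. exfalso. exact (nU x h A0x). }
    set (nu := fun k => proj1_sig (constructive_indefinite_description _ (Hx k))).
    assert (Hnu : forall k, Fs k (nu k) /\ nA (nu k) x).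
    { intro k. exact (proj2_sig (constructive_indefinite_description _ (Hx k))). }
    assert (chain : forall k, extends k (nu (S k)) (nu k)).
    { intro k. destruct (proj2 (HFs k) (nu (S k)) (proj1 (Hnu (S k)))) as [v [Fv ext]].
      assert (E : v = nu k).
      { apply (proj1 (proj2 (proj1 (HFs k)))); auto. apply Hnu.
        exists x. split. apply (proj1 ext). apply Hnu. apply Hnu. }
      subst v. exact ext. }
    assert (agree : forall d i, nw (nu (i + d)) i = nw (nu i) i /\ nN (nu (i + d)) i = nN (nu i) i).
    { induction d as [|d IH]; intro i.
      - rewrite Nat.add_0_r. auto.
      - rewrite Nat.add_succ_r. destruct (proj2 (chain (i + d)) i) as [e1 e2]; [lia|].
        rewrite e1, e2. apply IH. }
    assert (agree' : forall k i, i <= k -> nw (nu k) i = nw (nu i) i /\ nN (nu k) i = nN (nu i) i).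
    { intros k i Hik. replace k with (i + (k - i)) by lia. apply agree. }
    assert (Vk : forall k, valid X Y A0 B0 H k (nu k)).
    { intro k. apply (proj1 (proj1 (HFs k))). apply Hnu. }
    exists x, (fun i => nw (nu i) i), (fun i => nN (nu i) i).
    split; [exact A0x|]. split; [|split].
    + intro i. destruct (Vk i) as (_ & _ & _ & Hi & _).
      destruct (Hi i (le_n i)) as (h1 & h2 & h3 & h4 & _). auto.
    + intros k b Nb. destruct (Vk k) as (_ & _ & _ & Hi & _).
      destruct (Hi k (le_n k)) as (_ & _ & _ & _ & h5). apply h5; auto. apply Hnu.
    + intros m j. set (K := idx m j).
      destruct (Vk K) as (_ & _ & _ & _ & Ht).
      specialize (Ht m j (le_n K)).
      assert (Hm : m <= K) by (apply Nat.lt_le_incl; apply idx_gt).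
      rewrite (proj1 (agree' K m Hm)) in Ht.
      rewrite (prefix_ext (fun j' => nw (nu K) (idx m j')) (fun j' => nw (nu (idx m j')) (idx m j'))) in Ht.
      * exact Ht.
      * intros i Hij. apply agree'. apply Nat.lt_le_incl. apply idx_mono. exact Hij.
Qed.

Definition nextk {Y : topology} (w : nat -> Y) (m : nat) (U : Y -> Prop) : nat :=
  idx m (epsilon (inhabits 0) (fun j => U (w (idx m j)))).

Definition kk {Y : topology} (w : nat -> Y) (l : list (Y -> Prop)) : nat := fold_left (nextk w) l 0.

Definition sigma {Y : topology} (w : nat -> Y) (N : nat -> Y -> Prop) : choquet_beta_strategy Y :=
  fun l => (w (kk w l), fun z => N (kk w l) z /\ (forall U, In U l -> U z)).

Lemma kk_S {Y : topology} (w : nat -> Y) (U : nat -> Y -> Prop) n :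
  kk w (prefix U (S n)) = nextk w (kk w (prefix U n)) (U n).
Proof. unfold kk. rewrite prefix_S, fold_left_app. reflexivity. Qed.

Lemma chside (X Y : topology) (A0 : X -> Prop) (B0 : Y -> Prop) (H : nat -> X * Y -> Prop)
  (x : X) (w : nat -> Y) (N : nat -> Y -> Prop) :
  choquet_beta_unfavorable Y -> (forall k q, H (S k) q -> H k q) ->
  (forall i, is_open (N i) /\ N i (w i) /\ (forall b, N i b -> B0 b) /\ W_point (w i)) ->
  (forall k b, N k b -> H k (x,b)) ->
  (forall m j, tau_of (w m) (prefix (fun j' => w (idx m j')) j) (w (idx m j))) ->
  exists y, B0 y /\ forall k, H k (x,y).
Proof.
  intros HCh Hmono HN HH Htau.
  assert (conv : forall m, converges (fun j => w (idx m j)) (w m)).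
  { intro m. destruct (tau_of_spec (w m) (proj2 (proj2 (proj2 (HN m))))) as [_ Hc].
    apply Hc. intro j. apply Htau. }
  assert (Hnext : forall m (U : Y -> Prop), is_open U -> U (w m) -> U (w (nextk w m U))).
  { intros m U oU Um. unfold nextk.
    apply (epsilon_spec (inhabits 0) (fun j => U (w (idx m j)))).
    destruct (conv m U oU Um) as [N0 HN0]. exists N0. apply HN0. lia. }
  assert (Hmono' : forall d k q, H (k + d) q -> H k q).
  { induction d as [|d IH]; intros k q h. rewrite Nat.add_0_r in h; exact h.
    apply IH. apply Hmono. rewrite Nat.add_succ_r in h. exact h. }
  assert (kk_ge : forall (U : nat -> Y -> Prop) n, n <= kk w (prefix U n)).
  { intros U n. induction n as [|n IH]. lia. rewrite kk_S. unfold nextk.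
    pose proof (idx_gt (kk w (prefix U n)) (epsilon (inhabits 0) (fun j => U n (w (idx (kk w (prefix U n)) j))))). lia. }
  apply NNPP. intro Hno.
  apply (HCh (sigma w N)). intro U.
  assert (ALeg : forall i, choquet_alpha_legal (sigma w N) U i ->
            is_open (U i) /\ U i (w (kk w (prefix U i))) /\
            (forall y, U i y -> N (kk w (prefix U i)) y /\ forall U', In U' (prefix U i) -> U' y)).
  { intros i h. exact h. }
  split.
  - intros n Hal. unfold choquet_beta_legal. cbn [sigma].
    split; [|split].
    + apply open_inter. apply (HN _).
      apply open_list_all. intros U' HU'. apply in_prefix in HU'. destruct HU' as [i [Hi ->]].
      apply (ALeg i (Hal i Hi)).
    + split. apply (HN _).
      intros U' HU'. apply in_prefix in HU'. destruct HU' as [i [Hi ->]].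
      destruct n as [|n']; [lia|].
      destruct (ALeg n' (Hal n' (Nat.lt_succ_diag_r n'))) as (oU & Uw & sU).
      assert (Uw' : U n' (w (kk w (prefix U (S n'))))).
      { rewrite kk_S. apply Hnext; auto. }
      destruct (Nat.eq_dec i n') as [->|ne]; auto.
      apply (proj2 (sU _ Uw')). apply in_prefix. exists i. split; auto. lia.
    + intros m Hm y [_ Hy]. apply Hy. apply in_prefix. exists m. split; auto. lia.
  - intros Hal [y Hy]. apply Hno. exists y. split.
    + destruct (ALeg 0 (Hal 0)) as (_ & _ & sU).
      destruct (sU y (Hy 0)) as [Ny _]. apply (proj1 (proj2 (proj2 (HN _)))) in Ny. exact Ny.
    + intro k. destruct (ALeg k (Hal k)) as (_ & _ & sU).
      destruct (sU y (Hy k)) as [Ny _]. apply HH in Ny.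
      pose proof (kk_ge U k). apply (Hmono' (kk w (prefix U k) - k)).
      replace (k + (kk w (prefix U k) - k)) with (kk w (prefix U k)) by lia. exact Ny.
Qed.

Lemma dense_inter {T : topology} (A B : T -> Prop) :
  is_open A -> dense A -> dense B -> dense (fun x => A x /\ B x).
Proof.
  intros oA dA dB U oU neU.
  destruct (dA U oU neU) as [a [Ua Aa]].
  destruct (dB (fun x => U x /\ A x) (open_inter _ _ _ oU oA) (ex_intro _ a (conj Ua Aa))) as [b [[Ub Ab] Bb]].
  exists b; auto.
Qed.

Theorem theorem3p2 (X Y : topology) :
  baire_space X ->
  dense (fun y : Y => W_point y) ->
  choquet_beta_unfavorable Y ->
  baire_space (prod_topology X Y).
Proof.
  intros HX HWd HCh G oG dG O oO [p0 Op0].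
  destruct (oO p0 Op0) as (A0 & B0 & oA0 & oB0 & a0 & b0 & sub0).
  set (H := fun k (q : prod_topology X Y) => forall i, i <= k -> G i q).
  assert (oH : forall k, @is_open (prod_topology X Y) (H k)).
  { induction k as [|k IH].
    - apply (open_ext (G 0)). { intro q; split. intros h i Hi. replace i with 0 by lia. exact h. intro h; apply h; lia. }
      apply oG.
    - apply (open_ext (fun q => H k q /\ G (S k) q)).
      { intro q; split.
        - intros [h1 h2] i Hi. destruct (Nat.eq_dec i (S k)) as [->|ne]; auto. apply h1; lia.
        - intro h; split. intros i Hi; apply h; lia. apply h; lia. }
      apply open_inter; auto. }
  assert (dH : forall k, @dense (prod_topology X Y) (H k)).
  { induction k as [|k IH].
    - intros U oU neU. destruct (dG 0 U oU neU) as [q [Uq Gq]]. exists q. split; auto.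
      intros i Hi. replace i with 0 by lia. exact Gq.
    - intros U oU neU. destruct (dense_inter (H k) (G (S k)) (oH k) IH (dG (S k)) U oU neU) as [q [Uq [h1 h2]]].
      exists q. split; auto. intros i Hi. destruct (Nat.eq_dec i (S k)) as [->|ne]; auto. apply h1; lia. }
  assert (HR : rect_prop X Y H).
  { intros k A B oA oB [a Aa] [b Bb].
    set (R0 := fun q : prod_topology X Y => A (fst q) /\ B (snd q)).
    assert (oR0 : @is_open (prod_topology X Y) R0).
    { intros q Rq. exists A, B. destruct Rq. repeat split; auto. }
    destruct (dH k R0 oR0 (ex_intro _ (a,b) (conj Aa Bb))) as [q [Rq Hq]].
    destruct (open_inter (prod_topology X Y) R0 (H k) oR0 (oH k) q (conj Rq Hq))
      as (A1 & B1 & oA1 & oB1 & A1q & B1q & s1).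
    exists (fun a => A1 a /\ A a), (fun b => B1 b /\ B b).
    split. apply open_inter; auto. split. apply open_inter; auto.
    split. exists (fst q). split; auto. apply Rq.
    split. exists (snd q). split; auto. apply Rq.
    split. intros a' [_ h]; exact h. split. intros b' [_ h]; exact h.
    intros a' b' [h1 _] [h2 _]. apply (proj2 (s1 a' b' h1 h2)). }
  assert (Hmono : forall k q, H (S k) q -> H k q).
  { intros k q h i Hi. apply h. lia. }
  destruct (xside X Y A0 B0 H HX HR HWd oA0 oB0 (ex_intro _ _ a0) (ex_intro _ _ b0))
    as (x & w & N & A0x & HN & HH & Htau).
  destruct (chside X Y A0 B0 H x w N HCh Hmono HN HH Htau) as [y [B0y Hy]].
  exists (x, y). split.
  - apply sub0; auto.
  - intro n. apply (Hy n). lia.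
Qed.
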